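(* Let $d\ge3$, $\alpha<2$ and $1<q\le\frac{d-\alpha}{d-2}$. Then there is no positive function $u$ on $\mathbb Z^d$ satisfying $\Delta u(x)+(1+|x|)^{-\alpha}u(x)^q\le0$ for all $x\in\mathbb Z^d$.
   Context: $\mathbb Z^d$ is the lattice graph with $\mu_{xy}=1$ if $\|x-y\|_1=1$ and $\mu_{xy}=0$ otherwise, so $\mu(x)=2d$ and $\Delta u(x)=\frac1{2d}\sum_{y:\|y-x\|_1=1}(u(y)-u(x))$. $|x|$ is the Euclidean norm. *)

(* Defs.v *)
From HB Require Import structures.
From mathcomp Require Import all_boot all_order all_algebra.
From mathcomp Require Import all_classical all_reals all_analysis.
Set Implicit Arguments. Unset Strict Implicit. Unset Printing Implicit Defensive.
Import Order.TTheory GRing.Theory Num.Theory.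
Local Open Scope ring_scope.

(* Points of Z^d are integer row vectors 'rV[int]_d.
   The lattice neighbours y of x (||y - x||_1 = 1) are exactly x +/- e_i,
   e_i = delta_mx 0 i, so the normalized Laplacian (mu(x) = 2d) is *)
Definition lattice_laplacian (R : realType) (d : nat)
  (u : 'rV[int]_d -> R) (x : 'rV[int]_d) : R :=
  (2 * d)%:R^-1 *
    \sum_(i < d) ((u (x + delta_mx 0 i) - u x) + (u (x - delta_mx 0 i) - u x)).

Definition eucl_norm (R : realType) (d : nat) (x : 'rV[int]_d) : R :=
  Num.sqrt (\sum_(i < d) ((x 0 i)%:~R : R) ^+ 2).

(* Main.v *)
Require Import Defs.
From HB Require Import structures.
From mathcomp Require Import all_boot all_order all_algebra.
From mathcomp Require Import all_classical all_reals all_analysis.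
From mathcomp Require Import zify ring lra.
Import Order.TTheory GRing.Theory Num.Theory.
Local Open Scope ring_scope.
Set Implicit Arguments. Unset Strict Implicit. Unset Printing Implicit Defensive.

Section Box.
Variable d : nat.
Definition pt (N : nat) (f : {ffun 'I_d -> 'I_(N.*2.+1)}) : 'rV[int]_d :=
  \row_i ((f i : nat)%:Z - N%:Z).
Definition box N : seq 'rV[int]_d := map (@pt N) (enum {: {ffun 'I_d -> 'I_(N.*2.+1)}}).

Lemma size_box N : size (box N) = (N.*2.+1 ^ d)%N.
Proof. by rewrite size_map -cardE card_ffun !card_ord. Qed.

Lemma pt_inj N : injective (@pt N).
Proof.
move=> f g /matrixP E; apply/ffunP => i; apply/val_inj.
have := E 0 i; rewrite !mxE => /addIr /eqP; rewrite eqz_nat => /eqP //.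
Qed.

Lemma uniq_box N : uniq (box N).
Proof. by rewrite map_inj_uniq ?enum_uniq //; apply: pt_inj. Qed.

Lemma mem_box N x : (x \in box N) = [forall i, (- (N%:Z) <= x 0 i <= N%:Z)].
Proof.
apply/idP/forallP.
  case/mapP => f _ -> i; rewrite mxE; have := ltn_ord (f i).
  move: (nat_of_ord (f i)) => n Hn. apply/andP; split; lia.
move=> H; apply/mapP.
have H2 i : (0 <= x 0 i + N%:Z) && (absz (x 0%R i + N%:Z)%R < N.*2.+1)%N.
  have /andP[h1 h2] := H i. apply/andP; split; [lia|]. lia.
exists [ffun i => inord (absz (x 0 i + N%:Z))]; first by rewrite mem_enum.
apply/matrixP => i j; rewrite ord1 mxE ffunE inordK; last by case/andP: (H2 j).
case/andP: (H2 j) => h1 _. rewrite gez0_abs //. by rewrite addrK.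
Qed.
End Box.
Section OneD.
Variable R : realType.
Variable K : nat.
Hypothesis K1 : (1 <= K)%N.
Let k : R := K%:R.

Definition A (m : int) : R :=
  if m <= 0 then 1
  else if m <= K%:Z then 1 - (m%:~R)^+2 / (2 * k ^+ 2)
  else if m <= (K.*2)%:Z then (2 * k - m%:~R)^+2 / (2 * k ^+ 2)
  else 0.

Lemma k_gt0 : 0 < k. Proof. by rewrite /k ltr0n. Qed.
Lemma kZ : (K%:Z)%:~R = k :> R. Proof. by []. Qed.
Lemma K2Z : ((K.*2)%:Z)%:~R = 2 * k :> R.
Proof. by change ((K.*2)%:R = 2 * k :> R); rewrite -muln2 /k natrM mulrC. Qed.

Lemma toR (m n : int) : m <= n -> (m%:~R : R) <= n%:~R.
Proof. by rewrite ler_int. Qed.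

Lemma A1 m : m <= 0 -> A m = 1.
Proof. by rewrite /A => ->. Qed.

Lemma A2 m : 0 <= m <= K%:Z -> A m = 1 - (m%:~R)^+2 / (2 * k ^+ 2).
Proof.
case/andP=> h0 hK; rewrite /A hK; case: ifP => // h.
have -> : m = 0 by lia.
by rewrite expr2 mul0r mul0r subr0.
Qed.

Lemma A3 m : K%:Z <= m <= (K.*2)%:Z -> A m = (2 * k - m%:~R)^+2 / (2 * k ^+ 2).
Proof.
case/andP=> h0 hK; rewrite /A hK.
have -> : (m <= 0) = false by lia.
case: ifP => // h.
have -> : m = K%:Z by lia.
have kn : k != 0 by rewrite gt_eqF // k_gt0.
rewrite kZ; field.
exact: kn.
Qed.

Lemma A4 m : (K.*2)%:Z <= m -> A m = 0.
Proof.
move=> h; rewrite /A.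
have -> : (m <= 0) = false by lia.
have -> : (m <= K%:Z) = false by lia.
case: ifP => // h2. have -> : m = (K.*2)%:Z by lia.
by rewrite K2Z subrr expr2 !mul0r.
Qed.

Lemma A_bounds m : 0 <= A m <= 1.
Proof.
have kp := k_gt0.
have [h|h] := lerP m 0; first by rewrite A1 // ler01 lexx.
have [h2|h2] := lerP m K%:Z.
  rewrite A2; last by apply/andP; split; lia.
  have a0 : 0 <= m%:~R :> R by rewrite ler0z; lia.
  have a1 : m%:~R <= k by rewrite -kZ toR.
  have hh : (m%:~R ^+ 2 / (2 * k ^+ 2)) <= 1.
    rewrite ler_pdivrMr ?mulr_gt0 ?exprn_gt0 //; nra.
  apply/andP; split; last by rewrite lerBlDr lerDl divr_ge0 ?sqr_ge0 // mulr_ge0 // sqr_ge0.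
  by rewrite subr_ge0.
have [h3|h3] := lerP m (K.*2)%:Z.
  rewrite A3; last by apply/andP; split; lia.
  have a0 : k <= m%:~R :> R by rewrite -kZ toR //; lia.
  have a1 : m%:~R <= 2 * k by rewrite -K2Z toR.
  apply/andP; split; first by rewrite divr_ge0 ?sqr_ge0 // mulr_ge0 // sqr_ge0.
  rewrite ler_pdivrMr ?mulr_gt0 ?exprn_gt0 //; nra.
by rewrite A4 ?lexx ?ler01 //; lia.
Qed.

Lemma A_Dneg m : m <= -1 -> 2 * A m - A (m+1) - A (m-1) = 0.
Proof. by move=> h; rewrite !A1 //; try lia; rewrite mulr2n; lra. Qed.

Lemma A_D m : 0 <= m -> 2 * A m - A (m+1) - A (m-1) <= 2 * A m / k^+2.
Proof.
move=> m0.
have kp := k_gt0.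
have Ag0 x : 0 <= A x by case/andP: (A_bounds x).
have rhs0 : 0 <= 2 * A m / k^+2 by rewrite divr_ge0 ?mulr_ge0 ?exprn_ge0 // ltW.
have e1 : (m+1)%:~R = m%:~R + 1 :> R by rewrite intrD.
have e2 : (m-1)%:~R = m%:~R - 1 :> R by rewrite intrB.
set t := (m%:~R : R) in e1 e2.
have k2 : 0 < k^+2 by rewrite exprn_gt0.
have [h1|h1] := ltrP m K%:Z.
  rewrite (A2 (m := m)); last by apply/andP; split; lia.
  rewrite (A2 (m := m + 1)); last by apply/andP; split; lia.
  have t0 : 0 <= t by rewrite /t ler0z.
  have tk : t + 1 <= k by rewrite -e1 -kZ toR //; lia.
  have lb : 1 - (t - 1)^+2 / (2 * k^+2) <= A (m - 1).
    have [h2|h2] := lerP (m-1) 0.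
      rewrite A1 // lerBlDr lerDl divr_ge0 ?sqr_ge0 // mulr_ge0 // ltW //.
    rewrite (A2 (m := m - 1)) ?e2 //; apply/andP; split; lia.
  rewrite e1.
  set Am := 1 - t ^+ 2 / (2 * k ^+ 2).
  have Amh : 1/2 <= Am.
    rewrite /Am. have : t ^+ 2 / (2 * k ^+ 2) <= 1/2.
      rewrite ler_pdivrMr ?mulr_gt0 //. nra.
    lra.
  have eq1 : 2 * Am - (1 - (t + 1) ^+ 2 / (2 * k ^+ 2)) - (1 - (t - 1)^+2 / (2 * k^+2)) = 1 / k^+2.
    rewrite /Am; field. by rewrite gt_eqF.
  apply: (le_trans (y := 1 / k^+2)); first lra.
  have -> : 2 * Am / k^+2 = (2*Am) * (1/k^+2) by rewrite mul1r.
  rewrite -{1}[1/k^+2]mul1r ler_pM2r ?divr_gt0 //; lra.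
have [h1'|h1'] := eqVneq m K%:Z.
  rewrite h1' (A2 (m := K%:Z - 1)); last by apply/andP; split; lia.
  rewrite (A3 (m := K%:Z)); last by apply/andP; split; lia.
  rewrite (A3 (m := K%:Z + 1)); last by apply/andP; split; lia.
  rewrite intrB intrD kZ.
  have -> : 2 * ((2 * k - k) ^+ 2 / (2 * k ^+ 2)) -
      (2 * k - (k + 1%:~R)) ^+ 2 / (2 * k ^+ 2) -
      (1 - (k - 1%:~R) ^+ 2 / (2 * k ^+ 2)) = 0.
    field. by rewrite gt_eqF.
  apply: divr_ge0 (ltW k2); apply: mulr_ge0 => //; apply: divr_ge0; first exact: sqr_ge0.
  by apply: mulr_ge0 => //; exact: ltW.
have [h2|h2] := ltrP m (K.*2)%:Z.
  rewrite (A3 (m := m)); last by apply/andP; split; lia.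
  rewrite (A3 (m := m + 1)); last by apply/andP; split; lia.
  rewrite (A3 (m := m - 1)); last by apply/andP; split; lia.
  rewrite e1 e2.
  have -> : 2 * ((2 * k - t) ^+ 2 / (2 * k ^+ 2)) -
      (2 * k - (t + 1)) ^+ 2 / (2 * k ^+ 2) -
      (2 * k - (t - 1)) ^+ 2 / (2 * k ^+ 2) = - (1 / k^+2).
    field. by rewrite gt_eqF.
  have : 0 <= 1 / k^+2 by rewrite divr_ge0 // ltW.
  move: rhs0; rewrite (A3 (m := m)); last by apply/andP; split; lia.
  lra.
rewrite (A4 (m := m)) //. 
have := Ag0 (m+1); have := Ag0 (m-1). move: rhs0; rewrite (A4 (m := m)) //. lra.
Qed.

Definition a (n : int) : R := A (`|n| - K%:Z).

Lemma a_bounds n : 0 <= a n <= 1. Proof. exact: A_bounds. Qed.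

Lemma a_one n : `|n| <= K%:Z -> a n = 1.
Proof. by move=> h; rewrite /a A1 //; lia. Qed.

Lemma a_zero n : (3 * K)%:Z <= `|n| -> a n = 0.
Proof. by move=> h; rewrite /a A4 //; lia. Qed.

Lemma a_D n : 2 * a n - a (n+1) - a (n-1) <= (if K%:Z <= `|n| then 2 * a n / k^+2 else 0).
Proof.
have [->|n0] := eqVneq n 0.
  rewrite /a !A1 /=; try lia. have -> : (K%:Z <= 0) = false by lia. lra.
have E : a (n+1) + a (n-1) = A (`|n| - K%:Z + 1) + A (`|n| - K%:Z - 1).
  rewrite /a; have [np|nn] := ltrP 0 n.
    by congr (A _ + A _); lia.
  by rewrite addrC; congr (A _ + A _); lia.
have -> : 2 * a n - a (n + 1) - a (n - 1) = 2 * A (`|n| - K%:Z) - A (`|n| - K%:Z + 1) - A (`|n| - K%:Z - 1).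
  move: E; rewrite /a; lra.
case: ifP => h.
  apply: A_D; lia.
rewrite A_Dneg //; lia.
Qed.
End OneD.


Section Sums.
Variable R : realType.
Variable d : nat.

Lemma sum_nz (T : eqType) (s : seq T) (F : T -> R) :
  \sum_(x <- s) F x = \sum_(x <- s | F x != 0) F x.
Proof.
rewrite (bigID (fun x => F x == 0)) /= [X in X + _ = _]big1; first by rewrite add0r.
by move=> x /eqP.
Qed.
Lemma sum_supp (T : eqType) (s t : seq T) (F : T -> R) :
  uniq s -> uniq t -> (forall x, F x != 0 -> (x \in s) = (x \in t)) ->
  \sum_(x <- s) F x = \sum_(x <- t) F x.
Proof.
move=> us ut H.
rewrite sum_nz [RHS]sum_nz -big_filter -[RHS]big_filter.
apply: perm_big; apply: uniq_perm; rewrite ?filter_uniq //.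
move=> x; rewrite !mem_filter; case: (boolP (F x != 0)) => [/H ->|] //.
Qed.

Lemma sum_shift N (e : 'rV[int]_d) (F : 'rV[int]_d -> R) :
  (forall y, F y != 0 -> (y \in box d N) && (y - e \in box d N)) ->
  \sum_(x <- box d N) F (x + e) = \sum_(x <- box d N) F x.
Proof.
move=> H. rewrite -(big_map (fun x => x + e) xpredT F).
apply: sum_supp; [rewrite map_inj_uniq ?uniq_box //; exact: addIr | exact: uniq_box |].
move=> y /H /andP[h1 h2]; rewrite h1. apply/mapP; exists (y - e) => //; by rewrite subrK.
Qed.

Definition ev (i : 'I_d) : 'rV[int]_d := delta_mx 0 i.

Lemma evE i j : ev i 0 j = (i == j)%:R.
Proof. by rewrite /ev mxE eqxx /= eq_sym. Qed.

Lemma addevE y i j : (y + ev i) 0 j = y 0 j + (i == j)%:R.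
Proof. by rewrite mxE evE. Qed.
Lemma subevE y i j : (y - ev i) 0 j = y 0 j - (i == j)%:R.
Proof. by rewrite mxE [X in _ + X]mxE evE. Qed.

Lemma box_mono M N y : (M <= N)%N -> y \in box d M -> y \in box d N.
Proof.
move=> MN; rewrite !mem_box => /forallP H; apply/forallP => j.
have /andP[h1 h2] := H j; apply/andP; split; lia.
Qed.

Lemma shift_bound (z : int) (M : nat) (b : bool) : -(M%:Z) <= z <= M%:Z ->
  (-(M.+1%:Z) <= z + b%:R <= M.+1%:Z) && (-(M.+1%:Z) <= z - b%:R <= M.+1%:Z).
Proof. by case: b => /andP[h1 h2]; apply/andP; split; apply/andP; split; lia. Qed.

Lemma box_addev M y i : y \in box d M -> (y + ev i \in box d M.+1) && (y - ev i \in box d M.+1).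
Proof.
rewrite !mem_box => /forallP H; apply/andP; split; apply/forallP => j;
  have /andP[h1 h2] := shift_bound (i == j) (H j); rewrite ?addevE ?subevE //.
Qed.

End Sums.
Section S2.
Variable R : realType.
Variable d : nat.
Lemma sbp M (f u : 'rV[int]_d -> R) :
  (forall x, f x != 0 -> x \in box d M) ->
  \sum_(x <- box d M.+1) f x * lattice_laplacian u x =
  \sum_(x <- box d M.+1) u x * lattice_laplacian f x.
Proof.
move=> Hf.
rewrite /lattice_laplacian.
under eq_bigr do rewrite mulrCA.
under [RHS]eq_bigr do rewrite mulrCA.
rewrite -!mulr_sumr; congr (_ * _).
under eq_bigr do rewrite mulr_sumr.
under [RHS]eq_bigr do rewrite mulr_sumr.
rewrite (exchange_big) [RHS](exchange_big) /=.
apply: eq_bigr => i _.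
have S1 : \sum_(x <- box d M.+1) f x * u (x + ev i) = \sum_(x <- box d M.+1) u x * f (x - ev i).
  have S := sum_shift (N:=M.+1) (e:=ev i) (F:=fun y => f (y - ev i) * u y); rewrite /= in S.
  transitivity (\sum_(x <- box d M.+1) f (x - ev i) * u x); last by apply: eq_bigr => x _; rewrite mulrC.
  rewrite -S; first by apply: eq_bigr => x _; rewrite addrK.
  move=> y; case: (eqVneq (f (y - ev i)) 0) => [->|/Hf h _]; first by rewrite mul0r eqxx.
  have /andP[h1 h2] := box_addev i h; rewrite subrK in h1.
  by rewrite h1 (box_mono (M := M)).
have S2 : \sum_(x <- box d M.+1) f x * u (x - ev i) = \sum_(x <- box d M.+1) u x * f (x + ev i).
  have S := sum_shift (N:=M.+1) (e:=- ev i) (F:=fun y => f (y + ev i) * u y); rewrite /= in S.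
  transitivity (\sum_(x <- box d M.+1) f (x + ev i) * u x); last by apply: eq_bigr => x _; rewrite mulrC.
  rewrite -S; first by apply: eq_bigr => x _; rewrite subrK.
  move=> y; case: (eqVneq (f (y + ev i)) 0) => [->|/Hf h _]; first by rewrite mul0r eqxx.
  have /andP[h1 h2] := box_addev i h; rewrite addrK in h2.
  by rewrite h2 opprK (box_mono (M := M)).
have E1 : forall (g h : 'rV[int]_d -> R) x, g x * (h (x + ev i) - h x + (h (x - ev i) - h x)) =
   g x * h (x + ev i) + g x * h (x - ev i) - 2 * (g x * h x).
  move=> g h x; rewrite /ev; ring.
rewrite -[delta_mx 0 i]/(ev i).
under eq_bigr do rewrite E1.
under [RHS]eq_bigr do rewrite E1.
rewrite !sumrB !big_split /= S1 S2 -!mulr_sumr.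
have -> : \sum_(x <- box d M.+1) f x * u x = \sum_(x <- box d M.+1) u x * f x.
  by apply: eq_bigr => x _; rewrite mulrC.
ring.
Qed.
End S2.

Lemma absle (z : int) (N : nat) : -(N%:Z) <= z <= N%:Z -> `|z| <= N%:Z.
Proof. move=> /andP[h1 h2]; lia. Qed.
Lemma absgt (z : int) (N : nat) : (1 <= N)%N -> N%:Z <= `|z| -> ~~ (-((N.-1)%:Z) <= z <= (N.-1)%:Z).
Proof. move=> h1 h2; apply/negP => /andP[h3 h4]; lia. Qed.
Lemma absge (z : int) (N : nat) : ~~ (N%:Z <= `|z|) -> (-(N.-1%:Z) <= z <= N.-1%:Z).
Proof. move=> h; apply/andP; split; lia. Qed.

Section Phi.
Variable R : realType.
Variable d : nat.
Variable K : nat.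
Hypothesis K1 : (1 <= K)%N.
Hypothesis d0 : (0 < d)%N.
Let k : R := K%:R.

Definition phi (x : 'rV[int]_d) : R := \prod_(i < d) a R K (x 0 i).

Lemma phi_bounds x : 0 <= phi x <= 1.
Proof.
apply/andP; split; first by apply: prodr_ge0 => i _; case/andP: (a_bounds R K1 (x 0 i)).
by apply: prodr_ile1 => i _; exact: a_bounds.
Qed.

Lemma phi_one x : x \in box d K -> phi x = 1.
Proof.
rewrite mem_box => /forallP H; apply: big1 => i _; apply: a_one => //.
exact: absle (H i).
Qed.

Lemma phi_supp x : phi x != 0 -> x \in box d (3 * K).-1.
Proof.
move=> H; rewrite mem_box; apply/forallP => i.
have : a R K (x 0 i) != 0.
  apply: contra H => /eqP H0; rewrite /phi (bigD1 i) //= H0 mul0r //.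
move=> Hz; apply: (absge (N := 3 * K)); apply: contra Hz => /a_zero ->; done.
Qed.

Definition Pi (x : 'rV[int]_d) (i : 'I_d) : R := \prod_(j < d | j != i) a R K (x 0 j).

Lemma phi_split x i : phi x = a R K (x 0 i) * Pi x i.
Proof. by rewrite /phi (bigD1 i). Qed.

Lemma phi_splitP x i : phi (x + ev i) = a R K (x 0 i + 1) * Pi x i.
Proof.
rewrite /phi (bigD1 i) //= addevE eqxx /= mulr1n; congr (_ * _).
by apply: eq_bigr => j ji; rewrite addevE eq_sym (negbTE ji) addr0.
Qed.

Lemma phi_splitM x i : phi (x - ev i) = a R K (x 0 i - 1) * Pi x i.
Proof.
rewrite /phi (bigD1 i) //= subevE eqxx /= mulr1n; congr (_ * _).
by apply: eq_bigr => j ji; rewrite subevE eq_sym (negbTE ji) subr0.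
Qed.

Lemma Pi_ge0 x i : 0 <= Pi x i.
Proof. by apply: prodr_ge0 => j _; case/andP: (a_bounds R K1 (x 0 j)). Qed.

Lemma negL x : - lattice_laplacian phi x <= (if x \in box d K.-1 then 0 else phi x / k^+2).
Proof.
have kp : 0 < k by rewrite /k ltr0n.
have rhs0 : 0 <= (if x \in box d K.-1 then 0 else phi x / k^+2).
  case: ifP => _ //; apply: divr_ge0; [by case/andP: (phi_bounds x) | by rewrite exprn_ge0 // ltW].
rewrite /lattice_laplacian -mulrN -sumrN.
have step : forall i : 'I_d, - (phi (x + ev i) - phi x + (phi (x - ev i) - phi x)) <=
    (if x \in box d K.-1 then 0 else 2 * phi x / k^+2).
  move=> i. rewrite phi_splitP phi_splitM (phi_split x i).
  have -> : - (a R K (x 0 i + 1) * Pi x i - a R K (x 0 i) * Pi x i +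
     (a R K (x 0 i - 1) * Pi x i - a R K (x 0 i) * Pi x i)) =
     Pi x i * (2 * a R K (x 0 i) - a R K (x 0 i + 1) - a R K (x 0 i - 1)) by ring.
  apply: le_trans (ler_wpM2l (Pi_ge0 x i) (a_D R K1 (x 0 i))) _.
  case: ifP => h.
    have -> : (x \in box d K.-1) = false.
      apply/negbTE; rewrite mem_box negb_forall; apply/existsP; exists i.
      exact: absgt.
    by rewrite le_eqVlt -/k; apply/orP; left; apply/eqP; ring.
  rewrite mulr0; case: ifP => // _; apply: divr_ge0; last by rewrite exprn_ge0 // ltW.
  by apply: mulr_ge0 => //; apply: mulr_ge0; [by case/andP: (a_bounds R K1 (x 0 i)) | exact: Pi_ge0].
have h2 : \sum_(i < d) - (phi (x + ev i) - phi x + (phi (x - ev i) - phi x)) <=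
   \sum_(i < d) (if x \in box d K.-1 then 0 else 2 * phi x / k^+2).
  by apply: ler_sum => i _; exact: step i.
rewrite sumr_const card_ord in h2.
apply: le_trans (ler_wpM2l _ h2) _; first by rewrite invr_ge0 ler0n.
case: ifP => _; first by rewrite mul0rn mulr0.
have dn : d%:R != 0 :> R by rewrite pnatr_eq0 -lt0n.
rewrite natrM -[_ *+ d]mulr_natr le_eqVlt; apply/orP; left; apply/eqP; field.
by rewrite dn gt_eqF.
Qed.
End Phi.


Section Reals.
Variable R : realType.

Lemma sum_const_seq (T : Type) (s : seq T) (C : R) : \sum_(x <- s) C = C *+ size s.
Proof. by elim: s => [|y s IH]; rewrite ?big_nil ?big_cons ?IH ?mulrS. Qed.

Lemma sum_ge_term (T : eqType) (s : seq T) (F : T -> R) y :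
  uniq s -> y \in s -> (forall x, 0 <= F x) -> F y <= \sum_(x <- s) F x.
Proof.
move=> us ys F0; rewrite (bigD1_seq y) //=; rewrite lerDl; exact: sumr_ge0.
Qed.

Lemma young (U W c dl q : R) : 0 < U -> 0 < W -> 0 < c -> 0 < dl -> 1 < q ->
  U * c <= dl * W * U `^ q + (c / (dl * W)) `^ (q - 1)^-1 * c.
Proof.
move=> U0 W0 c0 dl0 q1.
have q10 : 0 < q - 1 by rewrite subr_gt0.
set T := (c / (dl * W)) `^ (q - 1)^-1.
have T0 : 0 <= T by exact: powR_ge0.
have t1 : 0 <= dl * W * U `^ q by rewrite mulr_ge0 ?powR_ge0 // mulr_ge0 // ltW.
have [UT|TU] := leP U T.
  by rewrite -[X in X <= _]add0r; apply: lerD => //; rewrite ler_pM2r.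
have e : T `^ (q - 1) = c / (dl * W).
  by rewrite /T -powRrM mulVf ?gt_eqF // powRr1 // divr_ge0 ?ltW // mulr_gt0.
have h : c / (dl * W) <= U `^ (q - 1).
  by rewrite -e; apply: ge0_ler_powR; rewrite ?nnegrE; [exact: ltW | exact: T0 | exact: ltW | exact: ltW].
have eU : U `^ q = U * U `^ (q - 1) by rewrite mulr_powRB1 // ?ltW // (lt_trans _ q1).
suff H1 : U * c <= dl * W * U `^ q by apply: (le_trans H1); rewrite lerDl; exact: mulr_ge0 T0 (ltW c0).
rewrite eU.
have -> : dl * W * (U * U `^ (q - 1)) = U * ((dl * W) * U `^ (q - 1)) by ring.
rewrite ler_pM2l //.
have dW : 0 < dl * W by rewrite mulr_gt0.
by rewrite -ler_pdivrMl // mulrC.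
Qed.

Lemma powR_decr (x y b : R) : b <= 0 -> 0 < x -> x <= y -> y `^ b <= x `^ b.
Proof.
move=> b0 x0 xy.
have y0 : 0 < y by apply: lt_le_trans xy.
have e z : z `^ b = (z `^ (- b))^-1 by rewrite -powRN opprK.
rewrite !e lef_pV2 ?posrE ?powR_gt0 //.
apply: ge0_ler_powR; rewrite ?nnegrE ?oppr_ge0 //; exact: ltW.
Qed.

Lemma powR_le1 (k E : R) : 1 <= k -> E <= 0 -> k `^ E <= 1.
Proof. by move=> k1 E0; rewrite -(powRr0 k); apply: ler_powR. Qed.

End Reals.

Lemma absgt2 (z : int) (N : nat) : (1 <= N)%N -> ~~ (-((N.-1)%:Z) <= z <= (N.-1)%:Z) -> N%:Z <= `|z|.
Proof. move=> h1 /negP h2; case: (lerP N%:Z `|z|) => // h3; exfalso; apply: h2; apply/andP; split; lia. Qed.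

Section Norms.
Variable R : realType.
Variable d : nat.

Lemma sqr_int_ge (z : int) (N : nat) : N%:Z <= `|z| -> (N%:R : R) ^+ 2 <= (z%:~R) ^+ 2.
Proof.
move=> h; rewrite -(real_normK (num_real (z%:~R : R))) -intr_norm.
apply: lerXn2r; rewrite ?nnegrE ?ler0n ?ler0z //.
by rewrite -[N%:R]/((N%:Z)%:~R) ler_int.
Qed.

Lemma sqr_int_le (z : int) (N : nat) : `|z| <= N%:Z -> (z%:~R : R) ^+ 2 <= (N%:R) ^+ 2.
Proof.
move=> h; rewrite -(real_normK (num_real (z%:~R : R))) -intr_norm.
apply: lerXn2r; rewrite ?nnegrE ?ler0n ?ler0z //.
by rewrite -[N%:R]/((N%:Z)%:~R) ler_int.
Qed.

Lemma norm_ge K (x : 'rV[int]_d) : (1 <= K)%N -> x \notin box d K.-1 -> K%:R <= eucl_norm R x.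
Proof.
move=> K1; rewrite mem_box negb_forall => /existsP [i Hi].
have hi := absgt2 K1 Hi.
have h1 := sqr_int_ge hi.
have h2 : ((x 0 i)%:~R : R) ^+ 2 <= \sum_(j < d) ((x 0 j)%:~R : R) ^+ 2.
  rewrite (bigD1 i) //= lerDl; apply: sumr_ge0 => j _; exact: sqr_ge0.
rewrite /eucl_norm -[X in X <= _]ger0_norm ?ler0n // -sqrtr_sqr ler_sqrt.
  exact: le_trans h2.
by apply: sumr_ge0 => j _; exact: sqr_ge0.
Qed.

Lemma norm_le N (x : 'rV[int]_d) : (1 <= d)%N -> x \in box d N -> eucl_norm R x <= d%:R * N%:R.
Proof.
move=> d1; rewrite mem_box => /forallP H.
have h : \sum_(j < d) ((x 0 j)%:~R : R) ^+ 2 <= (d%:R * N%:R) ^+ 2.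
  apply: (@le_trans _ _ (\sum_(j < d) (N%:R : R) ^+ 2)).
    by apply: ler_sum => j _; apply: sqr_int_le; exact: absle (H j).
  rewrite sumr_const card_ord -mulr_natr.
  have a1 : 1 <= d%:R :> R by rewrite ler1n.
  have b0 : 0 <= N%:R :> R by rewrite ler0n.
  nra.
rewrite /eucl_norm -[X in _ <= X]ger0_norm ?mulr_ge0 ?ler0n // -sqrtr_sqr ler_sqrt //.
Qed.
End Norms.

Section Pow.
Variable R : realType.

Lemma powRV (x s : R) : 0 <= x -> (x^-1) `^ s = (x `^ s)^-1.
Proof. by move=> x0; rewrite -powR_inv1 // -powRrM mulN1r powRN. Qed.

Lemma Tc_eq (c dl W s : R) : 0 < c -> 0 < dl -> 0 < W ->
  (c / (dl * W)) `^ s * c = dl `^ (- s) * W `^ (- s) * c `^ (s + 1).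
Proof.
move=> c0 dl0 W0.
rewrite invfM (powRM _ (ltW c0)); last by rewrite mulr_ge0 // invr_ge0 ltW.
rewrite powRM ?invr_ge0 ?ltW // !powRV ?ltW //.
rewrite powRD; last by apply/implyP => _; rewrite gt_eqF.
rewrite powRr1 ?ltW // !powRN; ring.
Qed.

Lemma weight_bound d K beta (x : 'rV[int]_d) : (1 <= d)%N -> (1 <= K)%N ->
  x \in box d (3 * K) -> x \notin box d K.-1 ->
  (1 + eucl_norm R x) `^ beta <= ((4 * d)%:R `^ beta + 1) * K%:R `^ beta.
Proof.
move=> d1 K1 xin xout.
have n1 := norm_ge R K1 xout.
have n2 := norm_le R d1 xin.
have k1 : 1 <= K%:R :> R by rewrite ler1n.
have d1' : 1 <= d%:R :> R by rewrite ler1n.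
have kp : 0 < K%:R :> R by rewrite ltr0n.
have n0 : 0 <= eucl_norm R x by exact: sqrtr_ge0.
have kb0 : 0 <= K%:R `^ beta :> R by exact: powR_ge0.
have [b0|b0] := leP 0 beta.
  apply: (@le_trans _ _ (((4 * d)%:R * K%:R) `^ beta)).
    apply: ge0_ler_powR => //; rewrite ?nnegrE; try lra.
    rewrite !natrM in n2 *. nra.
  rewrite powRM ?ler0n // ler_wpM2r // lerDl //.
apply: (@le_trans _ _ (K%:R `^ beta)).
  apply: powR_decr; [exact: ltW | exact: kp | lra].
rewrite -[X in X <= _]mul1r ler_wpM2r // lerDr; exact: powR_ge0.
Qed.
End Pow.

Section Main.
Variable R : realType.
Variable d : nat.
Variables alpha q : R.
Variable u : 'rV[int]_d -> R.
Hypothesis d1 : (1 <= d)%N.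
Hypothesis q1 : 1 < q.
Hypothesis upos : forall x, 0 < u x.
Hypothesis hu : forall x, lattice_laplacian u x + (1 + eucl_norm R x) `^ (- alpha) * (u x) `^ q <= 0.

Definition w (x : 'rV[int]_d) := (1 + eucl_norm R x) `^ (- alpha).
Definition f (x : 'rV[int]_d) := w x * (u x) `^ q.
Definition s := (q - 1)^-1.
Definition beta := alpha * s.
Definition M0 := ((4 * d)%:R `^ beta + 1) * 7%:R ^+ d.
Definition Ex := beta - 2 * (s + 1) + d%:R.

Lemma w_gt0 x : 0 < w x.
Proof. apply: powR_gt0; apply: (@lt_le_trans _ _ 1) => //; rewrite lerDl; exact: sqrtr_ge0. Qed.

Lemma f_gt0 x : 0 < f x.
Proof. by rewrite /f mulr_gt0 ?w_gt0 ?powR_gt0. Qed.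

Lemma f_ge0 x : 0 <= f x. Proof. exact: ltW (f_gt0 x). Qed.

Definition I K := \sum_(x <- box d (3 * K)) f x * phi R K x.
Definition Ann K := \sum_(x <- box d (3 * K)) (if x \in box d K.-1 then 0 else f x * phi R K x).
Definition S N := \sum_(x <- box d N) f x.

Lemma step1 K : (1 <= K)%N ->
  I K <= \sum_(x <- box d (3 * K)) u x * (- lattice_laplacian (phi R K) x).
Proof.
move=> K1.
apply: (@le_trans _ _ (\sum_(x <- box d (3*K)) phi R K x * (- lattice_laplacian u x))).
  apply: ler_sum => x _; rewrite mulrC; apply: ler_wpM2l.
    by case/andP: (phi_bounds R K1 x).
  by have := hu x; rewrite /f /w; lra.
have e3 : box d (3*K) = box d ((3*K).-1).+1 by rewrite prednK // muln_gt0 K1.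
under eq_bigr do rewrite mulrN.
under [X in _ <= X]eq_bigr do rewrite mulrN.
rewrite !sumrN e3 (sbp u (M := (3*K).-1) (f := phi R (d:=d) K)) //.
move=> x; exact: phi_supp.
Qed.

Definition B1 K dl := dl `^ (- s) * ((4 * d)%:R `^ beta + 1) * K%:R `^ beta * K%:R `^ (-2 * (s+1)).

Lemma B1_ge0 K dl : 0 <= B1 K dl.
Proof. by rewrite /B1 !mulr_ge0 ?powR_ge0 // addr_ge0 ?powR_ge0. Qed.

Lemma step2 K dl x : (1 <= K)%N -> 0 < dl -> x \in box d (3*K) ->
  u x * (- lattice_laplacian (phi R K) x) <=
  (if x \in box d K.-1 then 0 else dl * (f x * phi R K x)) + B1 K dl.
Proof.
move=> K1 dl0 xin.
have kp : 0 < K%:R :> R by rewrite ltr0n.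
apply: le_trans (ler_wpM2l (ltW (upos x)) (negL R K1 d1 x)) _.
case: ifP => hx; first by rewrite mulr0 add0r B1_ge0.
have [p0 p1] : 0 <= phi R K x /\ phi R K x <= 1 by apply/andP; exact: phi_bounds.
pose c := (K%:R : R) `^ (-2).
have c0 : 0 < c by rewrite powR_gt0.
have ce : phi R K x / K%:R ^+ 2 = phi R K x * c by rewrite /c powR_invn // ler0n.
rewrite ce.
have Y := young (upos x) (w_gt0 x) c0 dl0 q1.
rewrite -/s (Tc_eq _ c0 dl0 (w_gt0 x)) in Y.
set Tc := dl `^ (- s) * w x `^ (- s) * c `^ (s + 1) in Y.
have Tc0 : 0 <= Tc by rewrite /Tc !mulr_ge0 ?powR_ge0.
have h1 : u x * (phi R K x * c) <= dl * (f x * phi R K x) + Tc.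
  rewrite mulrCA mulrC.
  apply: le_trans (ler_wpM2r p0 Y) _.
  rewrite mulrDl /f; apply: lerD; first by rewrite le_eqVlt; apply/orP; left; apply/eqP; ring.
  by rewrite -[X in _ <= X]mulr1 ler_wpM2l.
apply: le_trans h1 _; apply: lerD => //.
rewrite /Tc /B1 -!mulrA; apply: ler_wpM2l; first exact: powR_ge0.
have ew : w x `^ (- s) = (1 + eucl_norm R x) `^ beta.
  by rewrite /w -powRrM mulrNN.
have ec : c `^ (s + 1) = K%:R `^ (-2 * (s + 1)) by rewrite /c -powRrM.
rewrite ew ec mulrA; apply: ler_wpM2r; first exact: powR_ge0.
apply: weight_bound => //; exact: negbT.
Qed.

Lemma powRD' (x r t : R) : 0 < x -> x `^ (r + t) = x `^ r * x `^ t.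
Proof. by move=> x0; rewrite powRD //; apply/implyP => _; rewrite gt_eqF. Qed.

Lemma I_le K dl : (1 <= K)%N -> 0 < dl ->
  I K <= dl * Ann K + dl `^ (- s) * M0 * K%:R `^ Ex.
Proof.
move=> K1 dl0.
have kp : 0 < K%:R :> R by rewrite ltr0n.
apply: le_trans (step1 K1) _.
apply: (@le_trans _ _ (\sum_(x <- box d (3 * K))
   ((if x \in box d K.-1 then 0 else dl * (f x * phi R K x)) + B1 K dl))).
  rewrite big_seq [X in _ <= X]big_seq; apply: ler_sum => x xin.
  exact: step2.
rewrite big_split /= sum_const_seq size_box; apply: lerD.
  rewrite /Ann mulr_sumr; apply: ler_sum => x _; case: ifP => _ //; by rewrite mulr0.
rewrite -[B1 K dl *+ _]mulr_natr natrX.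
have h7 : (((3 * K).*2.+1)%:R : R) ^+ d <= 7%:R ^+ d * K%:R `^ (d%:R).
  rewrite powR_mulrn ?ler0n // -exprMn -natrM; apply: lerXn2r; rewrite ?nnegrE ?ler0n //.
  by rewrite ler_nat; lia.
apply: le_trans (ler_wpM2l (B1_ge0 K dl) h7) _.
have eE : K%:R `^ Ex = K%:R `^ beta * K%:R `^ (-2 * (s+1)) * K%:R `^ (d%:R) :> R.
  rewrite -!powRD' //; congr (_ `^ _); rewrite /Ex; ring.
rewrite eE /B1 /M0; rewrite le_eqVlt; apply/orP; left; apply/eqP; ring.
Qed.

Lemma sum_sub N M (g : 'rV[int]_d -> R) : (N <= M)%N ->
  \sum_(x <- box d M) (if x \in box d N then g x else 0) = \sum_(x <- box d N) g x.
Proof.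
move=> NM.
rewrite [RHS](eq_big_seq (fun x => if x \in box d N then g x else 0)); last by move=> x ->.
apply: sum_supp; rewrite ?uniq_box //.
move=> x; case: ifP => [xN _|_]; last by rewrite eqxx.
by rewrite (box_mono NM xN).
Qed.

Lemma Ann_le_I K : (1 <= K)%N -> Ann K <= I K.
Proof.
move=> K1; apply: ler_sum => x _; case: ifP => _ //.
apply: mulr_ge0; first exact: f_ge0.
by case/andP: (phi_bounds R K1 x).
Qed.

Lemma S_le_I K : (1 <= K)%N -> S K <= I K.
Proof.
move=> K1; rewrite /S -(sum_sub _ (M := 3 * K)); last by rewrite leq_pmull.
apply: ler_sum => x _; case: ifP => xK.
  by rewrite (phi_one R K1 xK) mulr1.
apply: mulr_ge0; first exact: f_ge0.
by case/andP: (phi_bounds R K1 x).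
Qed.

Lemma Ann_le_S K : (1 <= K)%N -> Ann K <= S (3 * K) - S K.-1.
Proof.
move=> K1; rewrite /S -(sum_sub _ (M := 3 * K) (N := K.-1)); last by lia.
rewrite -sumrB; apply: ler_sum => x _; case: ifP => _; first by rewrite subrr.
rewrite subr0 -[X in _ <= X]mulr1; apply: ler_wpM2l; first exact: f_ge0.
by case/andP: (phi_bounds R K1 x).
Qed.

Lemma S_mono N M : (N <= M)%N -> S N <= S M.
Proof.
move=> NM; rewrite /S -(sum_sub _ NM); apply: ler_sum => x _; case: ifP => // _; exact: f_ge0.
Qed.

Lemma S_ge0 N : 0 <= S N.
Proof. by apply: sumr_ge0 => x _; exact: f_ge0. Qed.

Lemma zero_in_box N : (0 : 'rV[int]_d) \in box d N.
Proof. by rewrite mem_box; apply/forallP => i; rewrite mxE; apply/andP; split; lia. Qed.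

Lemma c0_le_I K : (1 <= K)%N -> f 0 <= I K.
Proof.
move=> K1.
have -> : f 0 = f 0 * phi R K (0 : 'rV[int]_d) by rewrite (phi_one R K1 (zero_in_box K)) mulr1.
apply: (sum_ge_term (F := fun x => f x * phi R K x)); rewrite ?uniq_box ?zero_in_box //.
move=> x; apply: mulr_ge0; first exact: f_ge0.
by case/andP: (phi_bounds R K1 x).
Qed.

Lemma no_sol : Ex <= 0 -> False.
Proof.
move=> hEx.
have kE K : (1 <= K)%N -> K%:R `^ Ex <= 1 :> R.
  by move=> K1; apply: powR_le1 => //; rewrite ler1n.
have M0p : 0 < M0.
  by rewrite /M0 mulr_gt0 ?exprn_gt0 ?ltr0n // ltr_pwDr ?powR_ge0.
have s0 : 0 < s by rewrite /s invr_gt0 subr_gt0.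
have hp : 0 < 1/2 :> R by [].
set C1 := (1/2 : R) `^ (- s) * M0.
have C1p : 0 <= C1 by rewrite mulr_ge0 ?powR_ge0 // ltW.
have Ibd K : (1 <= K)%N -> I K <= 2 * C1.
  move=> K1.
  have h := I_le K1 hp.
  have h2 := Ann_le_I K1.
  have h3 : (1/2 : R) `^ (- s) * M0 * K%:R `^ Ex <= C1.
    by rewrite -[X in _ <= X]mulr1; apply: ler_wpM2l => //; exact: kE.
  lra.
have Sbd N : S N <= 2 * C1.
  apply: le_trans (S_mono (leqnSn N)) _.
  apply: le_trans (S_le_I (ltn0Sn N)) _.
  exact: Ibd.
have c0p : 0 < f 0 := f_gt0 0.
set c0 := f 0 in c0p.
set dl1 := (2 * M0 / c0) `^ (q - 1).
have dl1p : 0 < dl1 by rewrite powR_gt0 // divr_gt0 // mulr_gt0.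
have edl : dl1 `^ (- s) = c0 / (2 * M0).
  rewrite /dl1 -powRrM /s mulrN mulfV; last by rewrite gt_eqF // subr_gt0.
  by rewrite powR_inv1 ?invf_div // ltW // divr_gt0 // mulr_gt0.
have Abd K : (1 <= K)%N -> c0 <= 2 * dl1 * Ann K.
  move=> K1.
  have h := I_le K1 dl1p.
  have h1 := c0_le_I K1.
  rewrite edl in h.
  have h3 : c0 / (2 * M0) * M0 * K%:R `^ Ex <= c0 / 2.
    have -> : c0 / (2 * M0) * M0 = c0 / 2 by field; rewrite gt_eqF.
    rewrite -[X in _ <= X]mulr1; apply: ler_wpM2l; [by rewrite divr_ge0 ?ltW | exact: kE].
  rewrite -/c0 in h1. lra.
pose eta := c0 / (2 * dl1).
have etap : 0 < eta by rewrite divr_gt0 // mulr_gt0.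
have Abd' K : (1 <= K)%N -> eta <= Ann K.
  move=> K1; rewrite /eta ler_pdivrMr ?mulr_gt0 // mulrC; exact: Abd.
pose Kseq j := iter j (fun n => (3 * n).+1) 1%N.
have Kpos j : (1 <= Kseq j)%N by case: j.
have grow j : eta *+ j <= S (Kseq j).-1.
  elim: j => [|j IH]; first by rewrite mulr0n S_ge0.
  have e : (Kseq j.+1).-1 = 3 * Kseq j by [].
  rewrite mulrS e.
  have := Ann_le_S (Kpos j); have := Abd' _ (Kpos j). lra.
have [j hj] : exists j : nat, 2 * C1 / eta < j%:R.
  exists (Num.Def.archi_bound (2 * C1 / eta)); apply: archi_boundP.
  by apply: divr_ge0; [apply: mulr_ge0 | apply: ltW].
have := le_trans (grow j) (Sbd _).
rewrite -mulr_natr; move: hj; rewrite ltr_pdivrMr // => hj.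
rewrite mulrC; lra.
Qed.
End Main.

Unset Implicit Arguments.
Theorem theorem7p4 (R : realType) (d : nat) (alpha q : R) :
  (3 <= d)%N -> alpha < 2 -> 1 < q -> q <= (d%:R - alpha) / (d%:R - 2) ->
  ~ exists u : 'rV[int]_d -> R,
      (forall x, 0 < u x) /\
      (forall x, lattice_laplacian u x
                 + (1 + eucl_norm R x) `^ (- alpha) * (u x) `^ q <= 0).
Proof.
move=> d3 ha hq hqd [u [upos hu]].
have d1 : (1 <= d)%N by apply: leq_trans d3.
apply: (no_sol d1 hq upos hu).
have d3' : 3 <= d%:R :> R by rewrite (ler_nat R 3 d).
have dm2 : 0 < d%:R - 2 :> R by lra.
have h : q * (d%:R - 2) <= d%:R - alpha by rewrite -ler_pdivlMr.
rewrite /Ex /beta /s.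
set t := (q - 1)^-1.
have tp : 0 < t by rewrite invr_gt0 subr_gt0.
have tq : t * (q - 1) = 1 by rewrite mulVf // gt_eqF // subr_gt0.
have -> : alpha * t - 2 * (t + 1) + d%:R = t * (alpha - 2 + (d%:R - 2) * (q - 1)).
  have -> : t * (alpha - 2 + (d%:R - 2) * (q - 1)) = t * (alpha - 2) + (d%:R - 2) * (t * (q - 1)) by ring.
  rewrite tq; ring.
rewrite pmulr_rle0 //; lra.
Qed.
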